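(* Let $\mathbf{S}=(S_n)_{n\in\mathbb{N}}$ be a stationary non-ergodic information source with finite (totally ordered) alphabet $A$ and sequence-space model $(A^{\mathbb{N}},\mathcal{Z},m,\sigma)$, let $\{m_s:s\in A^{\mathbb{N}}\}$ be the ergodic decomposition of $m$, and assume that $s\mapsto h_{m_s}(\mathbf{S})$ is $m$-integrable. If the limit $h^*_m(\mathbf{S})=\lim_{L\to\infty}\frac{1}{L-1}H_m(R_1^L)$ exists, then $h^*_m(\mathbf{S})\ge h_m(\mathbf{S})$ and $h^*_m(\mathbf{S})\ge\int_{A^{\mathbb{N}}}h^*_{m_s}(\mathbf{S})\,dm(s)$.
   Context: $m$ is the shift-invariant probability measure on $A^{\mathbb{N}}$ induced by the process, $\mathcal{Z}$ the product $\sigma$-algebra and $\sigma$ the left shift. The ergodic decomposition is a family of $\sigma$-invariant ergodic probability measures $m_s$ with $m_{\sigma(s)}=m_s$ and $m(C)=\int m_s(C)\,dm(s)$ for all $C\in\mathcal{Z}$. For a shift-invariant measure $\nu$, $h_\nu(\mathbf{S})=\lim_{L\to\infty}\frac1L H_\nu(S_1^L)$ is the metric entropy rate and $h^*_\nu(\mathbf{S})=\lim_{L\to\infty}\frac1{L-1}H_\nu(R_1^L)$ the permutation entropy rate, where $H_\nu$ is Shannon entropy (base 2) under $\nu$, $S_1^L=S_1\cdots S_L$, and $R_n=\sum_{i=1}^n\delta(S_i\le S_n)$ are the rank variables ($\delta(P)=1$ if $P$ holds, else $0$), $R_1^L=R_1\cdots R_L$. *)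

(* Defs.v *)
From HB Require Import structures.
From mathcomp Require Import all_boot all_order all_algebra.
From mathcomp Require Import all_classical all_reals all_analysis.
From mathcomp Require Import measurable_realfun.

Set Implicit Arguments.
Unset Strict Implicit.
Unset Printing Implicit Defensive.

Import Order.TTheory GRing.Theory Num.Theory.
Import numFieldNormedType.Exports.
Local Open Scope classical_set_scope.
Local Open Scope ring_scope.

Section SequenceSpace.
(* A : finite totally ordered alphabet; a0 : A witnesses that it is
   nonempty (needed only because measurable spaces in MathComp-Analysis
   must be pointed types). *)
Context {d : Order.disp_t} (A : finOrderType d) (a0 : A).

Definition seqs_of (a : A) : Type := nat -> A.
HB.instance Definition _ := Choice.on (seqs_of a0).
HB.instance Definition _ := isPointed.Build (seqs_of a0) (fun _ => a0).
Local Notation seqs := (seqs_of a0).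

(* Generators of the product sigma-algebra Z on A^N (A discrete):
   the coordinate cylinders {s | s_i = a}. *)
Definition coord_sets : set (set seqs) :=
  [set C | exists (i : nat) (a : A), C = [set s | s i = a]].

Definition seqspace := g_sigma_algebraType coord_sets.

Definition shift (s : seqspace) : seqspace := fun n => s n.+1.

Context {R : realType}.

Definition stationary (nu : probability seqspace R) : Prop :=
  forall C : set seqspace, measurable C -> nu (shift @^-1` C) = nu C.

Definition ergodic (nu : probability seqspace R) : Prop :=
  forall C : set seqspace, measurable C -> shift @^-1` C = C ->
    nu C = 0%E \/ nu C = 1%E.

Definition xlog2 (p : R) : R := if p == 0 then 0 else p * ln p / ln 2.

Definition entropy (V : finType) (nu : probability seqspace R)
  (X : seqspace -> V) : R :=
  - \sum_(v : V) xlog2 (fine (nu (X @^-1` [set v]))).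

(* S_1^L, encoded 0-based as (s_0, ..., s_{L-1}) *)
Definition word (L : nat) (s : seqspace) : {ffun 'I_L -> A} :=
  [ffun i : 'I_L => s (nat_of_ord i)].

(* R_n = sum_{i=1}^n delta(S_i <= S_n); 0-based: position j has rank
   #{ i <= j | s_i <= s_j } (a value in 1..j+1) *)
Definition rank_at (s : seqspace) (j : nat) : nat :=
  \sum_(i < j.+1) ((s i <= s j)%O : nat).

(* R_1^L as a finite-valued variable (ranks are <= L) *)
Definition ranks (L : nat) (s : seqspace) : {ffun 'I_L -> 'I_L.+1} :=
  [ffun j : 'I_L => inord (rank_at s j)].

Definition block_entropy (nu : probability seqspace R) (L : nat) : R :=
  entropy nu (word L).

Definition perm_block_entropy (nu : probability seqspace R) (L : nat) : R :=
  entropy nu (ranks L).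

Definition entropy_rate (nu : probability seqspace R) : R :=
  limn (fun L : nat => block_entropy nu L / L%:R).

Definition perm_entropy_rate_seq (nu : probability seqspace R) (L : nat) : R :=
  perm_block_entropy nu L / (L%:R - 1).

Definition perm_entropy_rate (nu : probability seqspace R) : R :=
  limn (perm_entropy_rate_seq nu).

Definition ergodic_decomposition (m : probability seqspace R)
  (ms : seqspace -> probability seqspace R) : Prop :=
  [/\ forall s, stationary (ms s) /\ ergodic (ms s),
      forall s (C : set seqspace), measurable C -> ms (shift s) C = ms s C,
      forall C : set seqspace, measurable C ->
        measurable_fun setT (fun s => ms s C)
    & forall C : set seqspace, measurable C ->
        m C = (\int[m]_s (ms s C))%E ].

End SequenceSpace.

(* Main.v *)
Require Import Defs.
From HB Require Import structures.
From mathcomp Require Import all_boot all_order all_algebra.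
From mathcomp Require Import all_classical all_reals all_analysis.
From mathcomp Require Import measurable_realfun.
Import Order.TTheory GRing.Theory Num.Theory.
Import numFieldNormedType.Exports.
From mathcomp Require Import lra ring.
Set Implicit Arguments.
Unset Strict Implicit.
Unset Printing Implicit Defensive.
Section Comb.
Context {d : Order.disp_t} (A : finOrderType d) (L : nat).

Definition rkc (w : {ffun 'I_L -> A}) (j : 'I_L) : nat :=
  #|[set i : 'I_L | (i <= j)%N && (w i <= w j)%O]|.
Definition rho (w : {ffun 'I_L -> A}) : {ffun 'I_L -> 'I_L.+1} :=
  [ffun j => inord (rkc w j)].
Definition cumc (w : {ffun 'I_L -> A}) (a : A) : nat :=
  #|[set i : 'I_L | (w i <= a)%O]|.
Definition cum (w : {ffun 'I_L -> A}) : {ffun A -> 'I_L.+1} :=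
  [ffun a => inord (cumc w a)].

Lemma card_le_L (P : {set 'I_L}) : #|P| <= L.
Proof. by rewrite -[X in _ <= X]card_ord max_card. Qed.

Lemma rho_rkc w w' : rho w = rho w' -> forall j, rkc w j = rkc w' j.
Proof.
move=> /ffunP E j; have := E j; rewrite !ffunE => /(congr1 (@nat_of_ord _)).
by rewrite !inordK // ltnS card_le_L.
Qed.

Lemma cum_cumc w w' : cum w = cum w' -> forall a, cumc w a = cumc w' a.
Proof.
move=> /ffunP E a; have := E a; rewrite !ffunE => /(congr1 (@nat_of_ord _)).
by rewrite !inordK // ltnS card_le_L.
Qed.

Lemma step_dir w w' (j : 'I_L) :
  rkc w j = rkc w' j ->
  (forall i i' : 'I_L, (i < i')%N -> (i' < j)%N ->
      (w i <= w i')%O = (w' i <= w' i')%O) ->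
  forall i : 'I_L, (i < j)%N -> (w i <= w j)%O -> (w' i <= w' j)%O.
Proof.
move=> Erk IH i ij wij; apply: contraT => nw'.
set S := [set i : 'I_L | (i <= j)%N && (w i <= w j)%O].
set S' := [set i : 'I_L | (i <= j)%N && (w' i <= w' j)%O].
have iS : i \in S by rewrite inE (ltnW ij) wij.
have iS' : i \notin S' by rewrite inE (negbTE nw') andbF.
have nsub : ~~ (S \subset S') by apply/fintype.subsetPn; exists i.
have [i' i'S' i'S] : exists2 i', i' \in S' & i' \notin S.
  apply/exists_inP; apply: contraR nsub; rewrite negb_exists_in => /forall_inP H.
  have sub : S' \subset S by apply/fintype.subsetP => x /H; rewrite negbK.
  have cE : #|S'| = #|S| by move: Erk; rewrite /rkc.
  have := subset_leqif_cards sub; rewrite cE => [[_]].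
  by rewrite eqxx => /esym /eqP ->.
move: i'S' i'S; rewrite !inE => /andP [i'j w'i'j].
rewrite i'j /= => nwi'.
have i'nej : i' != j by apply: contra nwi' => /eqP ->.
have i'j' : (i' < j)%N by rewrite ltn_neqAle i'j andbT; apply: contra i'nej => /eqP /val_inj ->.
rewrite -ltNge in nwi'; rewrite -ltNge in nw'.
have [ii'|i'i|eq] := ltngtP i i'.
- have := IH _ _ ii' i'j'; rewrite (ltW (le_lt_trans wij nwi')) => /esym H.
  by move: nw'; rewrite ltNge (le_trans H w'i'j).
- have := IH _ _ i'i ij; rewrite leNgt (le_lt_trans wij nwi') /= => /esym.
  by rewrite (ltW (le_lt_trans w'i'j nw')).
- by move/val_inj: eq => eq; subst i'; move: nwi'; rewrite ltNge wij.
Qed.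

Lemma rho_pair w w' : rho w = rho w' ->
  forall i j : 'I_L, (i < j)%N -> (w i <= w j)%O = (w' i <= w' j)%O.
Proof.
move=> E.
suff H : forall n (i j : 'I_L), (j < n)%N -> (i < j)%N -> (w i <= w j)%O = (w' i <= w' j)%O.
  by move=> i j; apply: (H j.+1).
elim=> [//|n IH] i j; rewrite ltnS leq_eqVlt => /orP [/eqP jn|]; last exact: IH.
have IH' : forall i i' : 'I_L, (i < i')%N -> (i' < j)%N -> (w i <= w i')%O = (w' i <= w' i')%O.
  by move=> a b ab; rewrite jn => bn; apply: IH.
have IH'' : forall i i' : 'I_L, (i < i')%N -> (i' < j)%N -> (w' i <= w' i')%O = (w i <= w i')%O.
  by move=> a b ab bj; rewrite IH'.
move=> ij; apply/idP/idP; first exact: (step_dir (rho_rkc E j) IH').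
exact: (step_dir (esym (rho_rkc E j)) IH'').
Qed.

Lemma rho_cum_inj w w' : rho w = rho w' -> cum w = cum w' -> w = w'.
Proof.
move=> Er Ec.
have P := rho_pair Er; have C := cum_cumc Ec.
(* the lexicographic predecessor set *)
pose B (v : {ffun 'I_L -> A}) (j : 'I_L) :=
  [set i : 'I_L | if (i <= j)%N then (v i <= v j)%O else (v i < v j)%O].
have EB : forall j, B w j = B w' j.
  move=> j; apply/setP => i; rewrite !inE.
  case: (ltngtP i j) => [ij|ji|/val_inj ->]; rewrite ?ltnW ?ltnNge ?ltnW //=.
  - by rewrite P.
  - by rewrite !ltNge P.
  - by rewrite !lexx.
suff key : forall v v', (forall j, B v j = B v' j) -> (forall a, cumc v a = cumc v' a) ->
   forall j, ~ (v j < v' j)%O.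
  apply/ffunP => j; case: (ltgtP (w j) (w' j)) => // H.
  - by case: (key w w' EB C j).
  - by case: (key w' w (fun j => esym (EB j)) (fun a => esym (C a)) j).
move=> v v' EB' C' j lt.
set S := [set i : 'I_L | (v i <= v j)%O].
set T := [set i : 'I_L | (v' i <= v j)%O].
have BS : B v j \subset S.
  apply/fintype.subsetP => i; rewrite !inE; case: ifP => _ // /ltW //.
have TB : T \proper B v j.
  rewrite properE; apply/andP; split.
    apply/fintype.subsetP => i; rewrite EB' !inE => vi.
    have h : (v' i < v' j)%O := le_lt_trans vi lt.
    by case: ifP => _; rewrite ?(ltW h).
  apply/fintype.subsetPn; exists j; first by rewrite inE leqnn lexx.
  by rewrite inE -ltNge.
have := leq_trans (proper_card TB) (subset_leq_card BS).
by rewrite /T /S -/(cumc v' _) -/(cumc v _) C' ltnn.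
Qed.

End Comb.

Section Fib.
Context {d : Order.disp_t} (A : finOrderType d) (L : nat).
Lemma fiber_card (y : {ffun 'I_L -> 'I_L.+1}) :
  #|[set w : {ffun 'I_L -> A} | rho w == y]| <= L.+1 ^ #|A|.
Proof.
rewrite -{2}(card_ord L.+1) -card_ffun.
rewrite -(card_in_imset (f := @cum _ A L)); first exact: max_card.
move=> w w'; rewrite !inE => /eqP h /eqP h' /(rho_cum_inj); apply.
by rewrite h h'.
Qed.
End Fib.
Local Open Scope ring_scope.
Section Ent.
Context {R : realType}.

Lemma ln_le_sub1 (t : R) : 0 < t -> ln t <= t - 1.
Proof.
move=> t0; have := @le_ln1Dx R (t - 1).
rewrite (_ : 1 + (t - 1) = t); last by rewrite addrC subrK.
by apply; rewrite ltrBrDl; lra.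
Qed.

Lemma gibbs (x a : R) : 0 <= x -> 0 <= a -> (a = 0 -> x = 0) ->
  - (x * ln x) <= - (x * ln a) + a - x.
Proof.
move=> x0 a0 ax; have [->|xn0] := eqVneq x 0.
  by rewrite !mul0r oppr0 add0r; lra.
have xp : 0 < x by rewrite lt0r xn0.
have ap : 0 < a by rewrite lt0r a0 andbT; apply/eqP => /ax /eqP; rewrite (negbTE xn0).
have := @ln_le_sub1 (a / x) (divr_gt0 ap xp).
rewrite lnM ?posrE ?invr_gt0 // lnV ?posrE //.
move=> /(ler_wpM2l (ltW xp)); rewrite mulrBr mulrDr mulrCA mulfV ?mulr1 //.
rewrite mulrN => h; rewrite -addrA -[X in _ <= X]opprK -mulrN; lra.
Qed.
End Ent.

Section Fiber.
Context {R : realType} (V W : finType) (p : V -> R) (f : V -> W) (K : nat).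
Hypothesis p0 : forall v, 0 <= p v.
Hypothesis p1 : \sum_v p v <= 1.
Hypothesis K0 : (0 < K)%N.
Hypothesis fib : forall w, (#|[set v | f v == w]| <= K)%N.
Let q w := \sum_(v | f v == w) p v.

Lemma q_ge0 w : 0 <= q w. Proof. exact: sumr_ge0. Qed.
Lemma p_le_q v : p v <= q (f v).
Proof. by rewrite /q (bigD1 v) //= lerDl sumr_ge0. Qed.

Lemma sum_pf (F : W -> R) : \sum_v p v * F (f v) = \sum_w q w * F w.
Proof.
rewrite (partition_big f xpredT) //=; apply: eq_bigr => w _.
by rewrite /q mulr_suml; apply: eq_bigr => v /eqP ->.
Qed.

Lemma fiber_entropy :
  - \sum_v p v * ln (p v) <= - \sum_w q w * ln (q w) + ln K%:R.
Proof.
have Kp : (0 : R) < K%:R by rewrite ltr0n.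
have step : forall v, - (p v * ln (p v)) <=
    - (p v * ln (q (f v))) + p v * ln K%:R + q (f v) / K%:R - p v.
  move=> v; have := @gibbs R (p v) (q (f v) / K%:R) (p0 v) (divr_ge0 (q_ge0 _) (ltW Kp)).
  have [qz|qnz] := eqVneq (q (f v)) 0.
    have pz : p v = 0 by apply/le_anti; rewrite p0 andbT -qz p_le_q.
    by rewrite pz qz !mul0r; lra.
  have qp : 0 < q (f v) by rewrite lt0r qnz q_ge0.
  rewrite lnM ?posrE ?invr_gt0 // lnV ?posrE // mulrDr mulrN.
  move=> h; have := h (fun e => False_ind _ (negP (lt0r_neq0 (divr_gt0 qp Kp)) (introT eqP e))).
  lra.
rewrite -sumrN; apply: (le_trans (ler_sum _ (fun v _ => step v))).
rewrite !big_split /= sumrN.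
rewrite (sum_pf (fun w => ln (q w))) -mulr_suml.
have e1 : \sum_v q (f v) / K%:R = \sum_w (#|[set v | f v == w]|%:R / K%:R) * q w.
  rewrite (partition_big f xpredT) //=; apply: eq_bigr => w _.
  rewrite (eq_bigr (fun _ => q w / K%:R)); last by move=> v /eqP ->.
  rewrite sumr_const.
  have -> : #|[pred v | f v == w]| = #|[set v | f v == w]|.
    by apply: eq_card => v; rewrite !inE.
  by rewrite -mulrA mulr_natl; congr (_ *+ _); rewrite mulrC.
have e2 : \sum_v p v = \sum_w q w by rewrite (partition_big f xpredT).
have e3 : \sum_w (#|[set v | f v == w]|%:R / K%:R) * q w <= \sum_w q w.
  apply: ler_sum => w _; rewrite ler_piMl ?q_ge0 //.
  by rewrite ler_pdivrMr // mul1r ler_nat.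
have lnK : 0 <= ln (K%:R : R) by rewrite ln_ge0 // ler1n.
have e4 : (\sum_w q w) * ln K%:R <= ln K%:R.
  rewrite -e2.
  by rewrite -[X in _ <= X]mul1r ler_wpM2r.
rewrite e1 sumrN e2; lra.
Qed.
End Fiber.
Local Open Scope classical_set_scope.
Section Meas.
Context {d : Order.disp_t} (A : finOrderType d) (a0 : A) {R : realType}.
Local Notation T := (seqspace a0).

Lemma coord_meas i a : measurable [set s : T | s i = a].
Proof. by apply: sub_gen_smallest; exists i, a. Qed.

Lemma word_meas L x : measurable (word L @^-1` [set x] : set T).
Proof.
have -> : word L @^-1` [set x] = \bigcap_(i in [set: 'I_L]) [set s : T | s i = x i].
  apply/seteqP; split => s /=.
  - by move=> <- i _; rewrite ffunE.
  - by move=> H; apply/ffunP => i; rewrite ffunE; exact: H.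
apply: fin_bigcap_measurable; first exact: finite_finset.
by move=> i _; apply: coord_meas.
Qed.

Lemma preim_meas (V : finType) (X : T -> V) :
  (forall v, measurable (X @^-1` [set v])) -> forall S : set V, measurable (X @^-1` S).
Proof.
move=> mX S; have -> : X @^-1` S = \bigcup_(v in S) X @^-1` [set v].
  by apply/seteqP; split => s /=; [move=> Ss; exists (X s)| case=> v Sv /= ->].
by apply: fin_bigcup_measurable; [exact: finite_finset|move=> v _; exact: mX].
Qed.

Lemma mu_preim (mu : {measure set T -> \bar R}) (V : finType) (X : T -> V) :
  (forall v, measurable (X @^-1` [set v])) -> forall P : pred V,
  mu (X @^-1` [set v | P v]) = (\sum_(v | P v) mu (X @^-1` [set v]))%E.
Proof.
move=> mX P.
suff H : forall r : seq V, uniq r ->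
  mu (X @^-1` [set v | P v && (v \in r)]) = (\sum_(v <- r | P v) mu (X @^-1` [set v]))%E.
  rewrite -H ?index_enum_uniq //; congr (mu _); apply/seteqP; split => s /=.
  - by move=> ->; rewrite mem_index_enum.
  - by case/andP.
elim=> [_|a r IH /= /andP [ar ur]].
  rewrite big_nil; rewrite (_ : _ @^-1` _ = set0) ?measure0 //.
  by apply/seteqP; split => s //=; rewrite in_nil andbF.
rewrite big_cons; case: ifP => Pa.
  rewrite -IH //.
  rewrite (_ : _ @^-1` _ = X @^-1` [set a] `|` X @^-1` [set v | P v && (v \in r)]).
    rewrite measureU //; try exact: preim_meas.
    apply/seteqP; split => s //= [-> /andP [_]]; by rewrite (negbTE ar).
  apply/seteqP; split => s /=.
  - by rewrite in_cons => /andP [Ps /orP [/eqP ->|sr]]; [left|right; rewrite Ps sr].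
  - by case=> [->|/andP [Ps sr]]; rewrite in_cons ?eqxx ?Pa ?Ps ?sr ?orbT.
rewrite -IH //; congr (mu _); apply/seteqP; split => s /=; rewrite in_cons.
- by case/andP => Ps /orP [/eqP E|->]; [move: Pa; rewrite -E Ps|rewrite Ps].
- by case/andP => -> ->; rewrite orbT.
Qed.

Definition pr (nu : probability T R) (V : finType) (X : T -> V) (v : V) : R :=
  fine (nu (X @^-1` [set v])).

Lemma pr_ge0 (nu : probability T R) (V : finType) (X : T -> V) v : 0 <= pr nu X v.
Proof. exact/fine_ge0/measure_ge0. Qed.

Lemma pr_sum_cond (nu : probability T R) (V : finType) (X : T -> V) (P : pred V) :
  (forall v, measurable (X @^-1` [set v])) ->
  fine (nu (X @^-1` [set v | P v])) = \sum_(v | P v) pr nu X v.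
Proof.
move=> mX; rewrite mu_preim // sum_fine // => v _.
by rewrite fin_num_measure.
Qed.

Lemma pr_sum1 (nu : probability T R) (V : finType) (X : T -> V) :
  (forall v, measurable (X @^-1` [set v])) -> \sum_v pr nu X v = 1.
Proof.
move=> mX; rewrite -(@pr_sum_cond nu V X xpredT) //.
have -> : X @^-1` [set v | xpredT v] = setT by apply/seteqP; split.
by rewrite probability_setT.
Qed.

Lemma pr_comp (nu : probability T R) (V W : finType) (X : T -> V) (f : V -> W) w :
  (forall v, measurable (X @^-1` [set v])) ->
  pr nu (f \o X) w = \sum_(v | f v == w) pr nu X v.
Proof.
move=> mX; rewrite -pr_sum_cond //; congr (fine (nu _)).
by apply/seteqP; split => s /= /eqP.
Qed.

End Meas.

Section P1.
Context {d : Order.disp_t} (A : finOrderType d) (a0 : A) {R : realType}.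
Local Notation T := (seqspace a0).

Lemma rank_atE L (s : T) (j : 'I_L) : rank_at s j = rkc (word L s) j.
Proof.
rewrite /rank_at /rkc (big_ord_widen L (fun i => ((s i <= s j)%O : nat))) //.
apply/esym; rewrite -sum1_card (eq_bigl (fun i : 'I_L => (i < j.+1)%N && (s i <= s j)%O)); last first.
  by move=> i; rewrite inE !ffunE.
rewrite big_mkcondr /=; apply: eq_bigr => i _ /=.
by case: (s i <= s j)%O.
Qed.

Lemma ranksE L : ranks L = @rho _ A L \o word L :> (T -> _).
Proof.
apply: funext => s /=; apply/ffunP => j; rewrite !ffunE.
by rewrite rank_atE.
Qed.

Lemma xlog2E (p : R) : xlog2 p = p * ln p / ln 2.
Proof. by rewrite /xlog2; case: eqP => // ->; rewrite !mul0r. Qed.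

Lemma entropyE (nu : probability T R) (V : finType) (X : T -> V) :
  entropy nu X = - (\sum_v pr nu X v * ln (pr nu X v)) / ln 2.
Proof.
by rewrite /entropy mulNr mulr_suml; congr (- _); apply: eq_bigr => v _; rewrite xlog2E.
Qed.

Lemma ln2_gt0 : 0 < ln (2 : R).
Proof. by rewrite ln_gt0 // ltr1n. Qed.

Lemma entropy_ge0 (nu : probability T R) (V : finType) (X : T -> V) :
  (forall v, measurable (X @^-1` [set v])) -> 0 <= entropy nu X.
Proof.
move=> mX; rewrite entropyE divr_ge0 ?(ltW ln2_gt0) // oppr_ge0.
apply: sumr_le0 => v _; rewrite mulr_ge0_le0 ?pr_ge0 // ln_le0 //.
rewrite -(pr_sum1 nu mX) (bigD1 v) //= lerDl sumr_ge0 // => *; exact: pr_ge0.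
Qed.

Lemma ranks_meas L w : measurable (ranks L @^-1` [set w] : set T).
Proof.
rewrite ranksE (_ : _ @^-1` _ = word L @^-1` [set v | @rho _ A L v == w]).
  by apply: preim_meas => v; exact: word_meas.
by apply/seteqP; split => s /= /eqP.
Qed.

Lemma part1_bound (nu : probability T R) L :
  block_entropy nu L <= perm_block_entropy nu L + ln ((L.+1 ^ #|A|)%N%:R) / ln 2.
Proof.
rewrite /block_entropy /perm_block_entropy !entropyE ranksE.
rewrite -mulrDl ler_pM2r ?invr_gt0 ?ln2_gt0 //.
have := @fiber_entropy R _ _ (pr nu (word L)) (@rho _ A L) (L.+1 ^ #|A|)
  (pr_ge0 nu _) _ _ (@fiber_card _ A L).
rewrite pr_sum1; last exact: word_meas.
move=> /(_ (lexx _)); rewrite expn_gt0 => /(_ isT).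
have E : forall w, \sum_(v | @rho _ A L v == w) pr nu (word L) v = pr nu (@rho _ A L \o word L) w.
  by move=> w; rewrite pr_comp //; exact: word_meas.
move=> h; apply: (le_trans h); rewrite lerD2r lerN2 le_eqVlt; apply/orP; left; apply/eqP/eq_bigr => w _.
by rewrite E.
Qed.
End P1.

Section Lims.
Context {R : realType}.

Lemma lim_nocvg (u : nat -> R) : ~ cvgn u -> limn u = 0.
Proof.
move=> nc; rewrite /lim /lim_in getPN //.
by move=> x ux; apply: nc; apply/cvg_ex; exists x.
Qed.

Lemma ln_small (e : R) : 0 < e -> \forall L \near \oo, ln (L.+1%:R : R) <= e * L%:R.
Proof.
move=> e0; pose M := 4 / e ^+ 2.
near=> L.
have LM : M < L%:R.
  near: L; have [k kM] : exists k : nat, M < k%:R.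
    exists (Num.trunc M).+1; rewrite -truncn_lt_nat ?divr_ge0 ?exprn_ge0 ?ltW //.
  by apply: filterS (nbhs_infty_ge k) => n kn; apply: (lt_le_trans kM); rewrite ler_nat.
have L0 : 0 <= L%:R :> R by [].
have e2L : 4 < e ^+ 2 * L%:R.
  by move: LM; rewrite /M ltr_pdivrMr ?exprn_gt0 // mulrC.
have h1 := expR_ge1Dx (e * L%:R / 2).
have h2 : expR (e * L%:R) = expR (e * L%:R / 2) * expR (e * L%:R / 2).
  by rewrite -expRD; congr expR; field.
have p1 : 0 <= 1 + e * L%:R / 2 by rewrite addr_ge0 // divr_ge0 // mulr_ge0 // ltW.
have h3 : (1 + e * L%:R / 2) * (1 + e * L%:R / 2) <= expR (e * L%:R).
  by rewrite h2; apply: ler_pM.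
have h4 : (L.+1%:R : R) <= expR (e * L%:R).
  apply: le_trans h3; rewrite -addn1 natrD.
  have : (L%:R : R) * 4 <= L%:R * (e ^+ 2 * L%:R) by rewrite ler_wpM2l // ltW.
  rewrite expr2; nra.
rewrite -[X in _ <= X](expRK (e * L%:R)) ler_ln ?posrE ?expR_gt0 //.
Unshelve. all: by end_near.
Qed.

Lemma c_small (N : nat) (e : R) : 0 < e ->
  \forall L \near \oo, ln ((L.+1 ^ N)%N%:R : R) / ln 2 / L%:R <= e.
Proof.
move=> e0; pose del := e * ln 2 / N.+1%:R.
have del0 : 0 < del by rewrite /del divr_gt0 ?mulr_gt0 ?ln2_gt0 ?ltr0n.
near=> L.
have hL : ln (L.+1%:R : R) <= del * L%:R by near: L; exact: ln_small.
have L1 : (1 <= L)%N by near: L; exact: nbhs_infty_ge.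
have Lp : (0 : R) < L%:R by rewrite ltr0n.
rewrite ler_pdivrMr // ler_pdivrMr ?ln2_gt0 //.
rewrite natrX lnXn ?ltr0n // -[_ *+ N]mulr_natr.
have lnp : 0 <= ln (L.+1%:R : R) by rewrite ln_ge0 // ler1n.
have -> : e * L%:R * ln 2 = del * L%:R * N.+1%:R.
  by rewrite /del; field; rewrite addrC natr1 pnatr_eq0.
by apply: ler_pM => //; rewrite ler_nat.
Unshelve. all: by end_near.
Qed.
End Lims.

Section Part1.
Context {d : Order.disp_t} (A : finOrderType d) (a0 : A) {R : realType}.
Local Notation T := (seqspace a0).

Lemma perm_seq_ge0 (nu : probability T R) L : (2 <= L)%N ->
  0 <= perm_entropy_rate_seq nu L.
Proof.
move=> L2; rewrite /perm_entropy_rate_seq divr_ge0 //.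
  by apply: entropy_ge0 => v; exact: ranks_meas.
by rewrite subr_ge0 ler1n; apply: leq_trans L2.
Qed.

Lemma part1 (m : probability T R) : cvgn (perm_entropy_rate_seq m) ->
  entropy_rate m <= perm_entropy_rate m.
Proof.
move=> cb; rewrite /entropy_rate /perm_entropy_rate.
set b := perm_entropy_rate_seq m.
set a := fun L : nat => block_entropy m L / L%:R.
have b0 : \forall L \near \oo, 0 <= b L.
  by apply: filterS (nbhs_infty_ge 2) => L; exact: perm_seq_ge0.
have hab : forall e, 0 < e -> \forall L \near \oo, a L <= b L + e.
  move=> e e0; near=> L.
  have L2 : (2 <= L)%N by near: L; exact: nbhs_infty_ge.
  have hc := c_small #|A| e0; have hcL : ln ((L.+1 ^ #|A|)%N%:R : R) / ln 2 / L%:R <= e.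
    by near: L; exact: c_small.
  have Lp : (0 : R) < L%:R by rewrite ltr0n; apply: leq_trans L2.
  have L1p : (0 : R) < L%:R - 1 by rewrite subr_gt0 ltr1n.
  have PE0 : 0 <= perm_block_entropy m L.
    by apply: entropy_ge0 => v; exact: ranks_meas.
  rewrite /a /b /perm_entropy_rate_seq.
  have Li : 0 <= (L%:R : R)^-1 by rewrite invr_ge0 ltW.
  apply: (le_trans (ler_wpM2r Li (part1_bound m L))).
  rewrite mulrDl lerD //.
  by rewrite ler_wpM2l // lef_pV2 ?posrE // lerBlDr lerDl.
case: (pselect (cvgn a)) => ca.
  apply/ler_addgt0Pr => e e0.
  have cbe : b n + e @[n --> \oo] --> limn b + e.
    by apply: cvgD => //; exact: cvg_cst.
  rewrite -(cvg_lim _ cbe) //.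
  by apply: ler_lim => //; [apply/cvg_ex; exists (limn b + e)|exact: hab].
by rewrite (lim_nocvg ca); apply: (limr_ge cb b0).
Unshelve. all: by end_near.
Qed.
End Part1.

Section Gen.
Context (dd : measure_display) (T : measurableType dd) (R : realType).
Local Open Scope ereal_scope.

Lemma le_integral_nm (mu : {measure set T -> \bar R}) (f g : T -> \bar R) :
  (forall x, 0 <= f x) -> (forall x, f x <= g x) ->
  \int[mu]_x f x <= \int[mu]_x g x.
Proof.
move=> f0 fg; rewrite !ge0_integralE //; last by move=> x _; apply: le_trans (fg x).
apply: ereal_sup_le => _ [h hf <-]; exists h => // x.
by apply: le_trans (hf x) _; rewrite /patch /=; case: ifP.
Qed.

Lemma le_limn_einf (u v : (\bar R)^nat) : (forall n, u n <= v n) ->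
  limn_einf u <= limn_einf v.
Proof.
move=> uv; rewrite !limn_einf_lim; apply: lee_lim; try exact: is_cvg_einfs.
apply: nearW => n; apply: le_ereal_inf_tmp => _ [m /= mn <-].
by apply: le_trans (uv m); apply: ereal_inf_lbound; exists m.
Qed.

Lemma limn_einf_ge0 (u : (\bar R)^nat) : (forall n, 0 <= u n) -> 0 <= limn_einf u.
Proof.
move=> u0; have := @le_limn_einf (fun=> 0) u u0.
by rewrite (cvg_limn_einf_sup (cvg_cst (0 : \bar R))).1.
Qed.

Lemma integrable_bounded (mu : probability T R) (q : T -> R) :
  measurable_fun setT q -> (forall s, 0 <= q s <= 1)%R ->
  mu.-integrable setT (EFin \o q).
Proof.
move=> mq q01; apply: (@le_integrable _ _ _ mu setT measurableT _ (EFin \o cst 1%R)) => //.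
- exact/measurable_EFinP.
- move=> x _ /=; rewrite lee_fin normr1 ger0_norm; by case/andP: (q01 x).
- exact: finite_measure_integrable_cst.
Qed.

Lemma integral_affine (mu : probability T R) (q : T -> R) (k b : R) :
  measurable_fun setT q -> (forall s, 0 <= q s <= 1)%R ->
  \int[mu]_s (k * q s + b)%:E = (k * fine (\int[mu]_s (q s)%:E) + b)%:E.
Proof.
move=> mq q01.
have iq := integrable_bounded mu mq q01.
have fq : \int[mu]_s (q s)%:E \is a fin_num.
  rewrite ge0_fin_numE ?integral_ge0 //; last by move=> x _; rewrite lee_fin; case/andP: (q01 x).
  have h1 := @le_integral_nm mu (fun s => (q s)%:E) (cst 1)
    (fun x => (andP (q01 x)).1) (fun x => (andP (q01 x)).2).
  rewrite integral_cst // mul1e in h1.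
  exact: le_lt_trans h1 (le_lt_trans (probability_le1 mu measurableT) (ltry _)).
transitivity (\int[mu]_s ((EFin \o (fun s => k * q s)%R) \+ (EFin \o cst b)) s).
  by apply: eq_integral => s _; rewrite /= EFinD.
rewrite integralD_EFin //.
- have -> : \int[mu]_x (EFin \o cst b) x = b%:E.
    rewrite (_ : EFin \o cst b = cst b%:E) // integral_cst //.
    have h1 : (mu : {measure set T -> \bar R}) setT = 1 := probability_setT mu.
    by rewrite h1 mule1.
  have -> : \int[mu]_x (EFin \o (fun s => k * q s)%R) x = k%:E * \int[mu]_s (q s)%:E.
    by rewrite -integralZl //; apply: eq_integral => x _; rewrite /= EFinM.
  by rewrite -[X in k%:E * X](fineK fq) -EFinM -EFinD.
- apply: (eq_integrable measurableT _ _ _ (integrableZl measurableT k iq)) => x _ /=.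
  by rewrite EFinM.
- exact: finite_measure_integrable_cst.
Qed.

Lemma integrable_affine (mu : probability T R) (q : T -> R) (k b : R) :
  measurable_fun setT q -> (forall s, 0 <= q s <= 1)%R ->
  mu.-integrable setT (fun s => (k * q s + b)%:E).
Proof.
move=> mq q01.
apply: (@le_integrable _ _ _ mu setT measurableT _ (EFin \o cst (`|k| + `|b|)%R)) => //.
- apply/measurable_EFinP; apply: measurable_funD => //.
  exact: measurable_funM.
- move=> x _ /=; rewrite lee_fin (ger0_norm (addr_ge0 (normr_ge0 _) (normr_ge0 _))).
  apply: (le_trans (ler_normD _ _)); rewrite lerD2r normrM.
  case/andP: (q01 x) => q0 q1; rewrite (ger0_norm q0).
  by rewrite -[X in (_ <= X)%R]mulr1 ler_wpM2l.
- exact: finite_measure_integrable_cst.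
Qed.

Lemma jensen_ent (mu : probability T R) (V : finType) (q : V -> T -> R) (p : V -> R) (c : R) :
  (0 <= c)%R -> (forall v, measurable_fun setT (q v)) -> (forall v s, 0 <= q v s <= 1)%R ->
  (forall v, p v = fine (\int[mu]_s (q v s)%:E)) ->
  \int[mu]_s (c * - \sum_v q v s * ln (q v s))%:E <= (c * - \sum_v p v * ln (p v))%:E.
Proof.
move=> c0 mq q01 pE.
have p0 : forall v, (0 <= p v)%R.
  move=> v; rewrite pE fine_ge0 // integral_ge0 // => x _.
  by rewrite lee_fin; case/andP: (q01 v x).
apply/lee_addgt0Pr => e e0.
pose N : R := #|V|%:R.
have cN1 : (0 < c * N + 1)%R by rewrite ltr_wpDl // mulr_ge0.
pose e' := (e / (c * N + 1))%R.
have e'0 : (0 < e')%R by rewrite divr_gt0.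
pose a v := (p v + e')%R.
have a0 : forall v, (0 < a v)%R by move=> v; rewrite ltr_wpDl.
pose k v := (c * (- ln (a v) - 1))%R.
pose b v := (c * a v)%R.
have step1 : forall s, (c * - \sum_v q v s * ln (q v s) <= \sum_v (k v * q v s + b v))%R.
  move=> s; rewrite -sumrN mulr_sumr; apply: ler_sum => v _.
  case/andP: (q01 v s) => q0 _.
  have := gibbs q0 (ltW (a0 v)) (fun h => False_ind _ (negP (lt0r_neq0 (a0 v)) (introT eqP h))).
  move=> /(ler_wpM2l c0); rewrite /k /b; move=> h; apply: (le_trans h).
  by rewrite le_eqVlt; apply/orP; left; apply/eqP; ring.
have H0 : forall s, (0 <= c * - \sum_v q v s * ln (q v s))%R.
  move=> s; rewrite mulr_ge0 // oppr_ge0; apply: sumr_le0 => v _.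
  by case/andP: (q01 v s) => q0 q1; rewrite mulr_ge0_le0 // ln_le0.
apply: (le_trans (@le_integral_nm mu _ (fun s => (\sum_v (k v * q v s + b v))%:E) _ _)).
- by move=> x; rewrite lee_fin.
- by move=> x; rewrite lee_fin.
under eq_integral do rewrite -sumEFin.
rewrite integral_sum //; last first.
  by move=> v; apply: integrable_affine.
under eq_bigr do rewrite integral_affine // -pE.
rewrite sumEFin -EFinD lee_fin.
have e1 : (\sum_v (k v * p v + b v) = c * \sum_v (- (p v * ln (a v)) + a v - p v))%R.
  by rewrite mulr_sumr; apply: eq_bigr => v _; rewrite /k /b; ring.
rewrite e1.
have e2 : (\sum_v (- (p v * ln (a v)) + a v - p v) <= \sum_v (- (p v * ln (p v)) + e'))%R.
  apply: ler_sum => v _; rewrite /a.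
  have : (- (p v * ln (p v + e')) <= - (p v * ln (p v)))%R.
    have [->|pn0] := eqVneq (p v) 0%R; first by rewrite !mul0r.
    have pp : (0 < p v)%R by rewrite lt0r pn0 p0.
    rewrite lerN2 ler_wpM2l // ler_ln ?posrE ?ltr_wpDl ?(ltW e'0) //.
    by rewrite lerDl ltW.
  lra.
have eR : (\sum_v (- (p v * ln (p v)) + e') = - \sum_v p v * ln (p v) + e' *+ #|V|)%R.
  by rewrite big_split /= sumrN sumr_const.
rewrite eR in e2.
apply: (le_trans (ler_wpM2l c0 e2)); rewrite mulrDr lerD2l.
rewrite -mulr_natr -/N /e'.
have -> : (c * (e / (c * N + 1) * N) = e * (c * N / (c * N + 1)))%R.
  by field; exact: lt0r_neq0 cN1.
rewrite -[X in (_ <= X)%R]mulr1 ler_wpM2l ?(ltW e0) // ler_pdivrMr // mul1r.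
by rewrite lerDl.
Qed.
End Gen.

Section Part2.
Context {d : Order.disp_t} (A : finOrderType d) (a0 : A) {R : realType}.
Local Notation T := (seqspace a0).

Lemma cvg_EFin_of (u : nat -> R) l : u @ \oo --> l -> (EFin \o u) @ \oo --> l%:E.
Proof. by move=> ul; apply: cvg_EFin => //; exact: nearW. Qed.

Lemma perm_seqE (nu : probability T R) L :
  perm_entropy_rate_seq nu L = ((ln 2)^-1 * (L%:R - 1)^-1) *
    - \sum_v pr nu (ranks L) v * ln (pr nu (ranks L) v).
Proof. by rewrite /perm_entropy_rate_seq /perm_block_entropy entropyE; ring. Qed.

Lemma pr_le1 (nu : probability T R) (V : finType) (X : T -> V) v :
  (forall v, measurable (X @^-1` [set v])) -> pr nu X v <= 1.
Proof.
move=> mX; rewrite -(pr_sum1 nu mX) (bigD1 v) //= lerDl sumr_ge0 // => *.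
exact: pr_ge0.
Qed.

Lemma perm_rate_ge0 (nu : probability T R) : 0 <= perm_entropy_rate nu.
Proof.
rewrite /perm_entropy_rate; case: (pselect (cvgn (perm_entropy_rate_seq nu))) => c.
  apply: limr_ge => //; apply: filterS (nbhs_infty_ge 2) => L.
  exact: perm_seq_ge0.
by rewrite lim_nocvg.
Qed.

Variables (m : probability T R) (ms : T -> probability T R).
Hypothesis msm : forall C : set T, measurable C -> measurable_fun setT (fun s => ms s C).
Hypothesis mint : forall C : set T, measurable C -> m C = (\int[m]_s (ms s C))%E.

Let q := fun (L : nat) (v : {ffun 'I_L -> 'I_L.+1}) (s : T) => pr (ms s) (ranks L) v.
Arguments q : clear implicits.

Lemma q_meas L v : measurable_fun setT (q L v).
Proof.
apply: (measurableT_comp (fine_measurable measurableT)).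
by apply: msm; exact: ranks_meas.
Qed.

Lemma q01 L v s : 0 <= q L v s <= 1.
Proof. by rewrite pr_ge0 pr_le1 //; exact: ranks_meas. Qed.

Lemma F_meas L : measurable_fun setT (fun s => perm_entropy_rate_seq (ms s) L).
Proof.
rewrite (_ : (fun s => _) = fun s => ((ln 2)^-1 * (L%:R - 1)^-1) *
    - \sum_v q L v s * ln (q L v s)); last by apply: funext => s; rewrite perm_seqE.
apply: measurable_funM => //; apply: measurable_funN.
apply: measurable_sum => v; apply: measurable_funM; first exact: q_meas.
apply: measurableT_comp; [exact: measurable_ln|exact: q_meas].
Qed.

Lemma stepC L : (1 <= L)%N ->
  (\int[m]_s (perm_entropy_rate_seq (ms s) L)%:E <= (perm_entropy_rate_seq m L)%:E)%E.
Proof.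
move=> L1.
under eq_integral do rewrite perm_seqE.
rewrite perm_seqE.
apply: (@jensen_ent _ _ _ m _ (q L)) => //.
- by rewrite mulr_ge0 // invr_ge0 ?(ltW ln2_gt0) // subr_ge0 ler1n.
- exact: q_meas.
- exact: q01.
- move=> v; rewrite /pr mint; last exact: ranks_meas.
  congr fine; apply: eq_integral => s _; rewrite /q /pr fineK //.
  by rewrite fin_num_measure //; exact: ranks_meas.
Qed.

Lemma part2 : cvgn (perm_entropy_rate_seq m) ->
  (\int[m]_s (perm_entropy_rate (ms s))%:E <= (perm_entropy_rate m)%:E)%E.
Proof.
move=> cb.
pose f n s := (perm_entropy_rate_seq (ms s) (n + 2))%:E.
have f0 : forall n s, (0 <= f n s)%E.
  by move=> n s; rewrite lee_fin perm_seq_ge0 // leq_addl.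
have mf : forall n, measurable_fun setT (f n).
  by move=> n; apply/measurable_EFinP; exact: F_meas.
have shift : forall u : nat -> R, cvgn u -> (fun n => (u (n + 2)%N)%:E) @ \oo --> (limn u)%:E.
  move=> u cu; apply: (cvg_EFin_of (u := fun n => u (n + 2)%N)).
  by rewrite (cvg_shiftn 2 u).
have pw : forall s, ((perm_entropy_rate (ms s))%:E <= limn_einf (f ^~ s))%E.
  move=> s; rewrite /perm_entropy_rate.
  case: (pselect (cvgn (perm_entropy_rate_seq (ms s)))) => c.
  - by rewrite (cvg_limn_einf_sup (shift _ c)).1.
  - by rewrite lim_nocvg //; exact: (limn_einf_ge0 (fun n => f0 n s)).
apply: (le_trans (le_integral_nm _ _ pw)).
  by move=> s; rewrite lee_fin perm_rate_ge0.
apply: (le_trans (fatou _ measurableT mf (fun n x _ => f0 n x))).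
rewrite /perm_entropy_rate -((cvg_limn_einf_sup (shift _ cb)).1).
apply: le_limn_einf => n; apply: stepC.
by rewrite addn2.
Qed.
End Part2.

Local Open Scope classical_set_scope.
Local Open Scope ring_scope.

Theorem corollary1 (R : realType) (d : Order.disp_t) (A : finOrderType d) (a0 : A)
  (m : probability (seqspace a0) R)
  (ms : seqspace a0 -> probability (seqspace a0) R) :
  stationary m ->
  ~ ergodic m ->
  ergodic_decomposition m ms ->
  m.-integrable setT (fun s => (entropy_rate (ms s))%:E) ->
  cvgn (perm_entropy_rate_seq m) ->
  entropy_rate m <= perm_entropy_rate m /\
  (\int[m]_s (perm_entropy_rate (ms s))%:E <= (perm_entropy_rate m)%:E)%E.
Proof.
move=> _ _ [_ _ msm mint] _ cb; split.
- exact: part1.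
- exact: (part2 msm mint cb).
Qed.
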